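(* Let $n\ge 1$, let $R$ be a commutative ring, $\iota:\mu_n\to R^\times$ an injective group homomorphism (extended by $\iota(0)=0$), and $X\in R$ an $\mathbb{S}[\mu_{n,+}]$-generator of $R$. For $z=\sum_j\iota(\alpha_j)X^j\in R$ (its unique such decomposition) let $\deg(z)$ be the smallest integer $m$ such that $\alpha_j=0$ for all $j>m$. Then: (i) For $m\in\mathbb{N}$, let $J_m=X^mR$ be the ideal generated by $X^m$. Every $z\in R$ admits a unique decomposition $z=a+b$ with $\deg(a)<m$ (i.e. $a=\sum_{j<m}\iota(\alpha_j)X^j$) and $b\in J_m$. (ii) The quotient $R_m:=R/J_m$ is a finite ring whose elements are uniquely written as (the classes of) $\sum_{j=0}^{m-1}\iota(\alpha_j)X^j$ with $\alpha_j\in\mu_n\cup\{0\}$. (iii) The quotient $R_1=R/J_1$ is a finite field with $n+1$ elements, and $\iota:\mu_n\cup\{0\}\to R$ is a multiplicative section of the quotient map $R\to R_1$. (iv) The canonical ring homomorphism $\pi:R\to\varprojlim_m R_m$ is injective. (v) The pair $(R,X)$ is uniquely specified up to isomorphism by its hold $h$: precisely, if $(R',\iota',X')$ is another such triple (same $n$) whose hold equals the hold of $(R,\iota,X)$, then there is a ring isomorphism $\rho:R\to R'$ with $\rho(X)=X'$ and $\rho\circ\iota=\iota'$.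
   Context: $\mu_n$ is the group of $n$-th roots of unity, $\mu_{n,+}=\mu_n\cup\{0\}$. For a ring $A$ with injective homomorphism $\iota:\mu_n\to A^\times$ ($\iota(0):=0$), $X\in A$ is an $\mathbb{S}[\mu_{n,+}]$-generator if every $z\in A$ is uniquely a finite sum $\sum_j\iota(\alpha_j)X^j$, $\alpha_j\in\mu_n\cup\{0\}$. Let $\mathcal{P}(\mu_n)$ be the set of sequences $(\alpha_j)_{j\in\mathbb{N}}$ in $\mu_n\cup\{0\}$ with finitely many nonzero terms, and $\sigma:\mathcal{P}(\mu_n)\to A$, $\sigma((\alpha_j))=\sum_j\iota(\alpha_j)X^j$ (a bijection when $X$ is a generator). The hold of $(A,\iota,X)$ is the map $h:\mu_n\to\mathcal{P}(\mu_n)$ defined by $\sigma(h(\xi))=\iota(\xi)+1$ for $\xi\in\mu_n$. *)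

(* Defs.v *)
From HB Require Import structures.
From mathcomp Require Import all_boot all_order all_algebra.
Set Implicit Arguments. Unset Strict Implicit. Unset Printing Implicit Defensive.
Import GRing.Theory.
Local Open Scope ring_scope.

(* mu_n is modelled as the cyclic group Z/nZ = 'I_n (k <-> zeta^k, for a
   fixed generator zeta); mu_{n,+} = mu_n u {0} is modelled as option 'I_n,
   with None playing the role of 0. *)

Definition mu_mul (n : nat) (i j : 'I_n) : 'I_n :=
  Ordinal (ltn_pmod (i + j) (leq_ltn_trans (leq0n i) (ltn_ord i))).

Definition muz_mul (n : nat) (a b : option 'I_n) : option 'I_n :=
  match a, b with Some i, Some j => Some (mu_mul i j) | _, _ => None end.

Definition iotaz (R : nzRingType) (n : nat) (iota : 'I_n -> R)
  (a : option 'I_n) : R := if a is Some i then iota i else 0.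

Definition is_mu_embedding (R : nzRingType) (n : nat) (iota : 'I_n -> R) : Prop :=
  [/\ (forall i, exists y, iota i * y = 1),
      (forall i j, iota (mu_mul i j) = iota i * iota j)
    & injective iota].

(* P(mu_n): finitely supported sequences (alpha_j)_j in mu_{n,+}; represented
   by finite lists with no trailing 0 (None), so that representation is unique *)
Definition noTrail (n : nat) (s : seq (option 'I_n)) : bool :=
  (s == [::]) || (last None s != None).

Definition sigma (R : nzRingType) (n : nat) (iota : 'I_n -> R) (X : R)
  (s : seq (option 'I_n)) : R :=
  \sum_(j < size s) iotaz iota (nth None s j) * X ^+ j.

Definition is_generator (R : nzRingType) (n : nat) (iota : 'I_n -> R) (X : R) : Prop :=
  forall z : R, exists! s : seq (option 'I_n), noTrail s /\ sigma iota X s = z.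

Definition deg_lt (R : nzRingType) (n : nat) (iota : 'I_n -> R) (X : R)
  (a : R) (m : nat) : Prop :=
  forall s : seq (option 'I_n), noTrail s -> sigma iota X s = a ->
    forall j, (m <= j)%N -> nth None s j = None.

Definition inJ (R : nzRingType) (X : R) (m : nat) (b : R) : Prop :=
  exists c : R, b = X ^+ m * c.

Definition congJ (R : nzRingType) (X : R) (m : nat) (z w : R) : Prop :=
  inJ X m (z - w).

Definition is_hold (R : nzRingType) (n : nat) (iota : 'I_n -> R) (X : R)
  (h : 'I_n -> seq (option 'I_n)) : Prop :=
  forall xi : 'I_n, noTrail (h xi) /\ sigma iota X (h xi) = iota xi + 1.

(* Main.v *)
Require Import Defs.
From HB Require Import structures.
From mathcomp Require Import all_boot all_order all_algebra ring zify.
Set Implicit Arguments. Unset Strict Implicit. Unset Printing Implicit Defensive.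
Import GRing.Theory.
Local Open Scope ring_scope.

Lemma sigma_nil (R : comNzRingType) n (iota : 'I_n -> R) X : sigma iota X [::] = 0.
Proof. by rewrite /sigma big_ord0. Qed.

Lemma sigma_cons (R : comNzRingType) n (iota : 'I_n -> R) X x s :
  sigma iota X (x :: s) = iotaz iota x + X * sigma iota X s.
Proof.
rewrite /sigma /= big_ord_recl /= expr0 mulr1 mulr_sumr; congr (_ + _).
by apply: eq_bigr => i _; rewrite exprS mulrCA.
Qed.

Lemma sigma_cat (R : comNzRingType) n (iota : 'I_n -> R) X s t :
  sigma iota X (s ++ t) = sigma iota X s + X ^+ size s * sigma iota X t.
Proof.
elim: s => [|x s IH] /=; first by rewrite sigma_nil add0r expr0 mul1r.
by rewrite !sigma_cons IH mulrDr addrA exprS mulrA.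
Qed.

Lemma sigma_nseq (R : comNzRingType) n (iota : 'I_n -> R) X k :
  sigma iota X (nseq k None) = 0.
Proof. by elim: k => [|k IH]; rewrite ?sigma_nil //= sigma_cons IH mulr0 addr0. Qed.

Lemma sigma_mkseq (R : comNzRingType) n (iota : 'I_n -> R) X f m :
  sigma iota X (mkseq f m) = \sum_(i < m) iotaz iota (f i) * X ^+ i.
Proof.
elim: m => [|m IH]; first by rewrite sigma_nil big_ord0.
rewrite mkseqS -cats1 sigma_cat IH big_ord_recr /= size_mkseq sigma_cons sigma_nil.
by rewrite mulr0 addr0 mulrC.
Qed.

Lemma sigma_widen (R : comNzRingType) n (iota : 'I_n -> R) X s m :
  (size s <= m)%N -> sigma iota X s = \sum_(i < m) iotaz iota (nth None s i) * X ^+ i.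
Proof.
move=> hs.
have -> : sigma iota X s = sigma iota X (s ++ nseq (m - size s) None).
  by rewrite sigma_cat sigma_nseq mulr0 addr0.
set s' := s ++ _.
have hs' : size s' = m by rewrite size_cat size_nseq subnKC.
rewrite -(mkseq_nth None s') hs' sigma_mkseq; apply: eq_bigr => i _.
rewrite /s' nth_cat; case: ifP => // /negbT; rewrite -leqNgt => hi.
by rewrite nth_nseq nth_default //; case: ifP.
Qed.

Fixpoint strip n (s : seq (option 'I_n)) : seq (option 'I_n) :=
  match s with
  | [::] => [::]
  | x :: s' => let t := strip s' in if (t == [::]) && (x == None) then [::] else x :: t
  end.

Lemma strip_nth n (s : seq (option 'I_n)) i : nth None (strip s) i = nth None s i.
Proof.
elim: s i => [|x s IH] i; first by [].
rewrite /=; case: ifP => [/andP [/eqP ht /eqP hx]|_]; last by case: i.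
case: i => [|i] /=; first by rewrite hx.
by rewrite -IH ht nth_nil.
Qed.

Lemma strip_noTrail n (s : seq (option 'I_n)) : noTrail (strip s).
Proof.
elim: s => [|x s IH] //=.
case: ifP => [//|/negbT]; rewrite negb_and /noTrail /=.
by case: (strip s) IH => [|y t] //=.
Qed.

Lemma strip_sigma (R : comNzRingType) n (iota : 'I_n -> R) X s :
  sigma iota X (strip s) = sigma iota X s.
Proof.
elim: s => [|x s IH] //=.
case: ifP => [/andP [/eqP ht /eqP hx]|_]; last by rewrite !sigma_cons IH.
by rewrite sigma_cons -IH ht hx sigma_nil mulr0 addr0.
Qed.

Lemma noTrail_size n (s t : seq (option 'I_n)) : noTrail t ->
  (forall i, nth None s i = nth None t i) -> (size t <= size s)%N.
Proof.
case: t => [//|y t] ht hst.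
rewrite leqNgt; apply/negP => hlt.
move: ht; rewrite /noTrail /=.
have := hst (size t); rewrite nth_default; last by [].
rewrite -[y :: t]/(y :: t) => e.
have : nth None (y :: t) (size (y :: t)).-1 = last None (y :: t) by rewrite nth_last.
by rewrite /= -e => <-.
Qed.

Lemma noTrail_eq n (s t : seq (option 'I_n)) : noTrail s -> noTrail t ->
  (forall i, nth None s i = nth None t i) -> s = t.
Proof.
move=> hs ht e.
have hsz : size s = size t.
  by apply/eqP; rewrite eqn_leq !noTrail_size // => i; rewrite e.
by apply: (eq_from_nth (x0 := None)) => // i _; rewrite e.
Qed.

Lemma gen_ex (R : comNzRingType) n (iota : 'I_n -> R) X (hX : is_generator iota X) z :
  exists s, noTrail s && (sigma iota X s == z).
Proof. have [s [[h1 h2] _]] := hX z; exists s; by rewrite h1 h2 eqxx. Qed.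

Definition rep (R : comNzRingType) n (iota : 'I_n -> R) X (hX : is_generator iota X) z :=
  xchoose (gen_ex hX z).

Lemma rep_spec (R : comNzRingType) n (iota : 'I_n -> R) X (hX : is_generator iota X) z :
  noTrail (rep hX z) /\ sigma iota X (rep hX z) = z.
Proof. by have /andP [h1 /eqP h2] := xchooseP (gen_ex hX z). Qed.

Definition coef (R : comNzRingType) n (iota : 'I_n -> R) X (hX : is_generator iota X) z i :=
  nth None (rep hX z) i.

Lemma sigma_nth_inj (R : comNzRingType) n (iota : 'I_n -> R) X (hX : is_generator iota X) s t :
  sigma iota X s = sigma iota X t -> forall i, nth None s i = nth None t i.
Proof.
move=> e i; have [s0 [_ U]] := hX (sigma iota X s).
rewrite -strip_nth -(strip_nth t).
have -> : strip s = s0 by apply: esym; apply: U; split; [exact: strip_noTrail | exact: strip_sigma].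
suff -> : s0 = strip t by [].
by apply: U; split; [exact: strip_noTrail | rewrite strip_sigma e].
Qed.

Lemma coef_sigma (R : comNzRingType) n (iota : 'I_n -> R) X (hX : is_generator iota X) s i :
  coef hX (sigma iota X s) i = nth None s i.
Proof. by apply: (sigma_nth_inj hX); case: (rep_spec hX (sigma iota X s)). Qed.

Lemma rep_sigma (R : comNzRingType) n (iota : 'I_n -> R) X (hX : is_generator iota X) s :
  noTrail s -> rep hX (sigma iota X s) = s.
Proof.
move=> hs; apply: noTrail_eq => //; first by case: (rep_spec hX (sigma iota X s)).
exact: coef_sigma.
Qed.

Lemma coef_ext (R : comNzRingType) n (iota : 'I_n -> R) X (hX : is_generator iota X) z w :
  (forall i, coef hX z i = coef hX w i) -> z = w.
Proof.
move=> e; have [h1 <-] := rep_spec hX z; have [h2 <-] := rep_spec hX w.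
by congr sigma; apply: noTrail_eq.
Qed.

Lemma decomp (R : comNzRingType) n (iota : 'I_n -> R) X (hX : is_generator iota X) z m :
  exists c, z = \sum_(i < m) iotaz iota (coef hX z i) * X ^+ i + X ^+ m * c.
Proof.
have [_ hz] := rep_spec hX z; set r := rep hX z in hz *.
set r' := r ++ nseq m None.
have e1 : sigma iota X r' = z by rewrite sigma_cat sigma_nseq mulr0 addr0.
have hm : (m <= size r')%N by rewrite size_cat size_nseq leq_addl.
exists (sigma iota X (drop m r')).
rewrite -{1}e1 -{1}(cat_take_drop m r') sigma_cat size_takel //.
congr (_ + _); rewrite (@sigma_widen _ _ _ _ (take m r') m) ?size_takel //.
apply: eq_bigr => i _; rewrite nth_take // /r' nth_cat /coef -/r.
case: ifP => // /negbT; rewrite -leqNgt => hi.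
by rewrite nth_nseq nth_default //; case: ifP.
Qed.

Lemma coef_trunc (R : comNzRingType) n (iota : 'I_n -> R) X (hX : is_generator iota X) (f : nat -> option 'I_n) m (c z : R) :
  z = \sum_(i < m) iotaz iota (f i) * X ^+ i + X ^+ m * c ->
  (forall i, (i < m)%N -> coef hX z i = f i) /\ (forall i, coef hX z (m + i) = coef hX c i).
Proof.
move=> ->; have [_ hc] := rep_spec hX c.
rewrite -sigma_mkseq -[in X ^+ m * c]hc.
have -> : sigma iota X (mkseq f m) + X ^+ m * sigma iota X (rep hX c) =
  sigma iota X (mkseq f m ++ rep hX c) by rewrite sigma_cat size_mkseq.
split=> i; rewrite coef_sigma nth_cat size_mkseq.
  by move=> hi; rewrite hi nth_mkseq.
by rewrite ltnNge leq_addr /= addKn.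
Qed.

Lemma coef_trunc0 (R : comNzRingType) n (iota : 'I_n -> R) X (hX : is_generator iota X) m (c z : R) :
  z = X ^+ m * c -> forall i, (i < m)%N -> coef hX z i = None.
Proof.
move=> e i hi.
have [|h _] := @coef_trunc R n iota X hX (fun _ => None) m c z.
  by rewrite e big1 ?add0r // => k _; rewrite /= mul0r.
exact: h.
Qed.

Lemma deg_lt_size n (s : seq (option 'I_n)) m : noTrail s ->
  (forall j, (m <= j)%N -> nth None s j = None) -> (size s <= m)%N.
Proof.
case: s => [//|y t] ht hj; rewrite leqNgt; apply/negP => hlt.
move: ht; rewrite /noTrail /=.
have := hj (size t) hlt.
have : nth None (y :: t) (size (y :: t)).-1 = last None (y :: t) by rewrite nth_last.
by rewrite /= => -> ->.
Qed.

Lemma iotaz_mul (R : comNzRingType) n (iota : 'I_n -> R) (hiota : is_mu_embedding iota) a b :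
  iotaz iota (muz_mul a b) = iotaz iota a * iotaz iota b.
Proof.
case: hiota => _ hm _.
by case: a => [a|]; case: b => [b|] //=; rewrite ?mul0r ?mulr0.
Qed.

Lemma iota_one (R : comNzRingType) n (iota : 'I_n -> R) (hiota : is_mu_embedding iota)
  (hn : (0 < n)%N) : iota (Ordinal hn) = 1.
Proof.
case: hiota => hu hm _; have [y hy] := hu (Ordinal hn).
have e : mu_mul (Ordinal hn) (Ordinal hn) = Ordinal hn by apply: val_inj; rewrite /= mod0n.
transitivity (iota (mu_mul (Ordinal hn) (Ordinal hn)) * y); first by rewrite hm -mulrA hy mulr1.
by rewrite e hy.
Qed.

Lemma mu_div n (a b : 'I_n) : exists c, mu_mul a c = b.
Proof.
have hn : (0 < n)%N by apply: leq_ltn_trans (ltn_ord a).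
exists (Ordinal (ltn_pmod (b + (n - a)) hn)); apply: val_inj => /=.
rewrite modnDmr.
have -> : (a + (b + (n - a)) = b + n)%N.
  by have := ltn_ord a; lia.
by rewrite modnDr modn_small.
Qed.

Definition fval (R : comNzRingType) n (iota : 'I_n -> R) X (F : seq (nat * option 'I_n)) : R :=
  \sum_(p <- F) iotaz iota p.2 * X ^+ p.1.

Definition cnt n (F : seq (nat * option 'I_n)) j :=
  count (fun p : nat * option 'I_n => (p.1 == j) && (p.2 != None)) F.

Definition newt n j (a : 'I_n) (s : seq (option 'I_n)) : seq (nat * option 'I_n) :=
  [seq ((j + k)%N, muz_mul (nth None s k) (Some a)) | k <- iota 0 (size s)].

Lemma fval_cat (R : comNzRingType) n (iota : 'I_n -> R) X F G :
  fval iota X (F ++ G) = fval iota X F + fval iota X G.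
Proof. by rewrite /fval big_cat. Qed.

Lemma fval_cons (R : comNzRingType) n (iota : 'I_n -> R) X p F :
  fval iota X (p :: F) = iotaz iota p.2 * X ^+ p.1 + fval iota X F.
Proof. by rewrite /fval big_cons. Qed.

Lemma fval_newt (R : comNzRingType) n (iota : 'I_n -> R) (hiota : is_mu_embedding iota) X j a s :
  fval iota X (newt j a s) = iota a * X ^+ j * sigma iota X s.
Proof.
rewrite /fval /newt big_map /sigma -[in RHS](big_mkord xpredT (fun k => iotaz iota (nth None s k) * X ^+ k)).
rewrite /index_iota subn0 mulr_sumr; apply: eq_bigr => k _ /=.
rewrite iotaz_mul // exprD /=; ring.
Qed.

Lemma fval_step (R : comNzRingType) n (iota : 'I_n -> R) (hiota : is_mu_embedding iota) X
  h (hh : is_hold iota X h) j a b c G : mu_mul a c = b ->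
  fval iota X ((j, Some a) :: (j, Some b) :: G) = fval iota X (G ++ newt j a (h c)).
Proof.
move=> e; rewrite fval_cat fval_newt // !fval_cons /=.
have [_ ->] := hh c; rewrite -e; case: hiota => _ -> _; ring.
Qed.

Lemma cnt_cat n (F G : seq (nat * option 'I_n)) i : cnt (F ++ G) i = (cnt F i + cnt G i)%N.
Proof. by rewrite /cnt count_cat. Qed.

Lemma cnt_newt n j (a : 'I_n) s i : (i <= j)%N -> (cnt (newt j a s) i <= (i == j))%N.
Proof.
move=> hij; rewrite /cnt /newt count_map.
case: (size s) => [|k] //=.
rewrite addn0 (@eq_in_count _ _ pred0) ?count_pred0 ?addn0; last first.
  move=> x; rewrite mem_iota => /andP [hx _] /=; apply/negbTE; rewrite negb_and.
  by apply/orP; left; apply/eqP; lia.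
by rewrite eq_sym; case: (i == j); case: (_ != None).
Qed.

Lemma pick2 n (G : seq (nat * option 'I_n)) j : (1 < cnt G j)%N ->
  exists a b G0, perm_eq G ((j, Some a) :: (j, Some b) :: G0).
Proof.
set P := (fun p : nat * option 'I_n => (p.1 == j) && (p.2 != None)).
have pick1 : forall H : seq (nat * option 'I_n), (0 < count P H)%N ->
    exists a, perm_eq H ((j, Some a) :: rem (j, Some a) H) /\ count P H = (count P (rem (j, Some a) H)).+1.
  move=> H; rewrite -has_count => /hasP [[k [x|]] hin] /andP [/= /eqP hk hx] //.
  exists x; rewrite -hk; have hp := perm_to_rem hin; split => //.
  by rewrite (permP hp) /= /P /= hk eqxx.
move=> hc; have [|a [p1 c1]] := pick1 G; first by apply: leq_trans hc.
have [|b [p2 c2]] := pick1 (rem (j, Some a) G).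
  by move: hc; rewrite /cnt -/P c1.
exists a, b, (rem (j, Some b) (rem (j, Some a) G)).
by apply: (perm_trans p1); rewrite perm_cons.
Qed.

Lemma cnt_perm n (F G : seq (nat * option 'I_n)) i : perm_eq F G -> cnt F i = cnt G i.
Proof. by move=> h; rewrite /cnt (permP h). Qed.

Lemma fval_perm (R : comNzRingType) n (iota : 'I_n -> R) X F G :
  perm_eq F G -> fval iota X F = fval iota X G.
Proof. by move=> h; rewrite /fval (perm_big _ h). Qed.

Lemma reduce_at (R R' : comNzRingType) n (iota : 'I_n -> R) (iota' : 'I_n -> R') X X'
  (hiota : is_mu_embedding iota) (hiota' : is_mu_embedding iota') h
  (hh : is_hold iota X h) (hh' : is_hold iota' X' h) j :
  forall k G, (cnt G j <= k)%N -> exists G',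
    [/\ fval iota X G' = fval iota X G, fval iota' X' G' = fval iota' X' G,
        (cnt G' j <= 1)%N & forall i, (i < j)%N -> cnt G' i = cnt G i].
Proof.
elim=> [|k IH] G hk.
  by exists G; split => //; apply: leq_trans hk _.
case: (leqP (cnt G j) 1) => h1; first by exists G.
have [a [b [G0 hp]]] := pick2 h1.
have [c hc] := mu_div a b.
set G1 := G0 ++ newt j a (h c).
have cG : forall i, cnt G i = ((j == i) + (j == i) + cnt G0 i)%N.
  by move=> i; rewrite (cnt_perm i hp) /cnt /= andbT addnA.
have [|G' [e1 e2 c1 c2]] := IH G1.
  rewrite cnt_cat; have := cnt_newt a (h c) (leqnn j); rewrite eqxx.
  by move: hk; rewrite cG eqxx; lia.
exists G'; split => //.
- by rewrite e1 /G1 -(fval_step hiota hh j G0 hc) (fval_perm _ _ hp).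
- by rewrite e2 /G1 -(fval_step hiota' hh' j G0 hc) (fval_perm _ _ hp).
- move=> i hi; rewrite c2 // cnt_cat cG.
  have := cnt_newt a (h c) (ltnW hi).
  have -> : (i == j) = false by apply/eqP; lia.
  have -> : (j == i) = false by apply/eqP; lia.
  by lia.
Qed.

Lemma reduce (R R' : comNzRingType) n (iota : 'I_n -> R) (iota' : 'I_n -> R') X X'
  (hiota : is_mu_embedding iota) (hiota' : is_mu_embedding iota') h
  (hh : is_hold iota X h) (hh' : is_hold iota' X' h) m F :
  exists G, [/\ fval iota X G = fval iota X F, fval iota' X' G = fval iota' X' F
     & forall i, (i < m)%N -> (cnt G i <= 1)%N].
Proof.
elim: m => [|m [G [e1 e2 hG]]]; first by exists F.
have [G' [f1 f2 g1 g2]] := reduce_at hiota hiota' hh hh' (leqnn (cnt G m)).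
exists G'; split; [by rewrite f1 | by rewrite f2 |].
move=> i; rewrite ltnS leq_eqVlt => /orP [/eqP -> // | hi].
by rewrite g2 // hG.
Qed.

Definition dig n (G : seq (nat * option 'I_n)) i :=
  head None [seq p.2 | p <- G & (p.1 == i) && (p.2 != None)].

Definition shiftF n (G : seq (nat * option 'I_n)) m :=
  [seq ((p.1 - m)%N, p.2) | p <- G & (m <= p.1)%N].

Lemma extract (R : comNzRingType) n (iota : 'I_n -> R) X m (G : seq (nat * option 'I_n)) :
  (forall i, (i < m)%N -> (cnt G i <= 1)%N) ->
  fval iota X G = \sum_(i < m) iotaz iota (dig G i) * X ^+ i + X ^+ m * fval iota X (shiftF G m).
Proof.
elim: G => [|[k x] G IH] hG.
  by rewrite /fval big_nil big1 ?add0r ?big_nil ?mulr0 // => i _; rewrite /= mul0r.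
have hG' : forall i, (i < m)%N -> (cnt G i <= 1)%N.
  by move=> i hi; apply: leq_trans (hG i hi); rewrite /cnt /= leq_addl.
rewrite fval_cons IH //= /shiftF /=.
case: (leqP m k) => hmk.
- rewrite fval_cons /= -/(shiftF G m).
  have -> : \sum_(i < m) iotaz iota (dig ((k, x) :: G) i) * X ^+ i =
            \sum_(i < m) iotaz iota (dig G i) * X ^+ i.
    apply: eq_bigr => i _; rewrite /dig /=.
    by have -> : (k == i) = false by apply/eqP => e; move: (ltn_ord i); lia.
  have -> : X ^+ k = X ^+ m * X ^+ (k - m) by rewrite -exprD subnKC.
  ring.
- rewrite -/(shiftF G m).
  case: x hG => [a|] hG; last first.
    rewrite /= mul0r add0r; congr (_ + _); apply: eq_bigr => i _.
    by rewrite /dig /= andbF.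
  have c0 : cnt G k = 0%N.
    by have := hG k hmk; rewrite /cnt /= eqxx /=; lia.
  have d0 : dig G k = None.
    rewrite /dig; suff -> : [seq p <- G | (p.1 == k) && (p.2 != None)] = [::] by [].
    by apply: size0nil; rewrite size_filter; exact: c0.
  rewrite [in LHS](bigD1 (Ordinal hmk)) // [in RHS](bigD1 (Ordinal hmk)) //= d0.
  have -> : dig ((k, Some a) :: G) k = Some a by rewrite /dig /= eqxx.
  rewrite mul0r add0r addrA; congr (_ + _ + _).
  apply: eq_bigr => i hi; congr (_ * _); rewrite /dig /=.
  suff -> : (k == i) = false by [].
  by apply/eqP => e; move: hi; apply/negP; rewrite negbK; apply/eqP/val_inj.
Qed.

Lemma coef_agree (R R' : comNzRingType) n (iota : 'I_n -> R) (iota' : 'I_n -> R') X X'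
  (hiota : is_mu_embedding iota) (hiota' : is_mu_embedding iota')
  (hX : is_generator iota X) (hX' : is_generator iota' X') h
  (hh : is_hold iota X h) (hh' : is_hold iota' X' h) F i :
  coef hX (fval iota X F) i = coef hX' (fval iota' X' F) i.
Proof.
have [G [e1 e2 hG]] := reduce hiota hiota' hh hh' i.+1 F.
rewrite -e1 -e2.
have [c1 _] := coef_trunc hX (extract iota X hG).
have [c2 _] := coef_trunc hX' (extract iota' X' hG).
by rewrite c1 // c2.
Qed.

Definition toF n (s : seq (option 'I_n)) : seq (nat * option 'I_n) :=
  [seq (k, nth None s k) | k <- iota 0 (size s)].

Lemma fval_toF (R : comNzRingType) n (iota : 'I_n -> R) X s :
  fval iota X (toF s) = sigma iota X s.
Proof.
rewrite /fval /toF big_map /sigma -[in RHS](big_mkord xpredT (fun k => iotaz iota (nth None s k) * X ^+ k)).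
by rewrite /index_iota subn0.
Qed.

Definition mulF n (A B : seq (nat * option 'I_n)) : seq (nat * option 'I_n) :=
  [seq ((p.1 + q.1)%N, muz_mul p.2 q.2) | p <- A, q <- B].

Lemma fval_mulF (R : comNzRingType) n (iota : 'I_n -> R) (hiota : is_mu_embedding iota) X A B :
  fval iota X (mulF A B) = fval iota X A * fval iota X B.
Proof.
rewrite /fval /mulF big_allpairs_dep mulr_suml; apply: eq_bigr => p _.
rewrite mulr_sumr; apply: eq_bigr => q _ /=.
rewrite iotaz_mul // exprD; ring.
Qed.

Theorem proposition5p6 (n : nat) (hn : (0 < n)%N) (R : comNzRingType)
  (iota : 'I_n -> R) (X : R)
  (hiota : is_mu_embedding iota) (hX : is_generator iota X) :
  (* (i) *)
  (forall (m : nat) (z : R),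
     exists! ab : R * R,
       [/\ deg_lt iota X ab.1 m, inJ X m ab.2 & z = ab.1 + ab.2]) /\
  (* (ii) *)
  (forall m : nat,
     (exists r : seq R, forall z : R, exists2 w, w \in r & congJ X m z w) /\
     (forall z : R, exists! s : m.-tuple (option 'I_n), congJ X m z (sigma iota X s))) /\
  (* (iii) *)
  [/\ ~ inJ X 1 1,
      (forall z : R, ~ inJ X 1 z -> exists w : R, congJ X 1 (z * w) 1),
      (forall z : R, exists! a : option 'I_n, congJ X 1 z (iotaz iota a)),
      #|{: option 'I_n}| = n.+1
    & (forall a b : option 'I_n,
         iotaz iota (muz_mul a b) = iotaz iota a * iotaz iota b)] /\
  (* (iv) *)
  (forall z w : R, (forall m : nat, congJ X m z w) -> z = w) /\
  (* (v) *)
  (forall (R' : comNzRingType) (iota' : 'I_n -> R') (X' : R'),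
     is_mu_embedding iota' -> is_generator iota' X' ->
     forall h : 'I_n -> seq (option 'I_n),
       is_hold iota X h -> is_hold iota' X' h ->
       exists rho : {rmorphism R -> R'},
         [/\ bijective rho, rho X = X' & forall xi, rho (iota xi) = iota' xi]).
Proof.
have e1 := iota_one hiota hn.
split; [|split; [|split; [|split]]].
-
  move=> m z; have [c hc] := decomp hX z m.
  set a := \sum_(i < m) iotaz iota (coef hX z i) * X ^+ i in hc.
  have ea : a = sigma iota X (mkseq (coef hX z) m) by rewrite sigma_mkseq.
  exists (a, X ^+ m * c); split.
    split => //=; last by exists c.
    move=> s hs hsa j hj.
    by rewrite -(coef_sigma hX s j) hsa ea coef_sigma nth_default // size_mkseq.
  move=> [a' b'] /= [hdeg [c' hb] hz].
  have [r1 r2] := rep_spec hX a'.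
  have hsz : (size (rep hX a') <= m)%N := deg_lt_size r1 (hdeg _ r1 r2).
  have ea' : a' = \sum_(i < m) iotaz iota (coef hX a' i) * X ^+ i.
    by rewrite -(sigma_widen _ _ hsz) r2.
  have [|ct _] := @coef_trunc _ _ _ _ hX (coef hX a') m c' z.
    by rewrite hz hb -ea'.
  have eaa : a = a'.
    apply: (@coef_ext _ _ _ _ hX) => i; rewrite ea coef_sigma.
    case: (ltnP i m) => hi; first by rewrite nth_mkseq // ct.
    by rewrite nth_default ?size_mkseq // /coef nth_default //; apply: leq_trans hi.
  rewrite -eaa; congr pair; apply: (@addrI _ a); by rewrite -hc hz eaa.
-
  move=> m.
  have mk : forall z, exists t : m.-tuple (option 'I_n),
      val t = mkseq (coef hX z) m /\ congJ X m z (sigma iota X t).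
    move=> z; have ht : size (mkseq (coef hX z) m) == m by rewrite size_mkseq.
    exists (Tuple ht); split => //.
    have [c hc] := decomp hX z m; exists c.
    by rewrite /= sigma_mkseq {1}hc addrAC subrr add0r.
  split.
    exists [seq sigma iota X (val t) | t <- enum {: m.-tuple (option 'I_n)}] => z.
    have [t [_ ht]] := mk z; exists (sigma iota X t) => //.
    by apply: map_f; rewrite mem_enum.
  move=> z; have [t [et ht]] := mk z; exists t; split => // t' [c' hc'].
  have e : z = sigma iota X t' + X ^+ m * c' by rewrite -hc' addrC subrK.
  rewrite (@sigma_widen _ _ _ _ t' m) ?size_tuple // in e.
  have [ct _] := coef_trunc hX e.
  apply: val_inj; apply: (@eq_from_nth _ None); first by rewrite !size_tuple.
  move=> i; rewrite size_tuple => hi; rewrite et nth_mkseq // ct //.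
-
  case: (hiota) => hu hm _.
  split.
  + move=> [c hc].
    have := coef_trunc0 hX hc (ltn0Sn 0).
    have -> : (1 : R) = sigma iota X [:: Some (Ordinal hn)].
      by rewrite sigma_cons sigma_nil mulr0 addr0 /= e1.
    by rewrite coef_sigma.
  + move=> z hz; have [c hc] := decomp hX z 1.
    move: hc; rewrite big_ord1 /= expr0 mulr1.
    case: (coef hX z 0) => [i|] hc; last first.
      by exfalso; apply: hz; exists c; rewrite hc /= add0r.
    have [y hy] := hu i; exists y; exists (c * y).
    by rewrite hc /= mulrDl hy addrAC subrr add0r mulrA.
  + move=> z; have [c hc] := decomp hX z 1.
    exists (coef hX z 0); split.
      by exists c; rewrite {1}hc big_ord1 expr0 mulr1 addrAC subrr add0r.
    move=> a [c' hc'].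
    have e : z = \sum_(i < 1) iotaz iota ((fun _ => a) i) * X ^+ i + X ^+ 1 * c'.
      by rewrite big_ord1 expr0 mulr1 -hc' addrC subrK.
    have [ct _] := @coef_trunc _ _ _ _ hX (fun _ => a) 1 c' z e.
    exact: ct 0%N (ltn0Sn 0).
  + by rewrite card_option card_ord.
  + exact: iotaz_mul.
-
  move=> z w hzw; apply/eqP; rewrite -subr_eq0; apply/eqP.
  apply: (@coef_ext _ _ _ _ hX) => i; have [c hc] := hzw i.+1.
  rewrite (coef_trunc0 hX hc (ltnSn i)).
  have -> : (0 : R) = sigma iota X [::] by rewrite sigma_nil.
  by rewrite coef_sigma nth_nil.
-
  move=> R' iota' X' hiota' hX' h hh hh'.
  have e1' := iota_one hiota' hn.
  pose rho := fun z : R => sigma iota' X' (rep hX z).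
  have coef_rho : forall z i, coef hX' (rho z) i = coef hX z i.
    by move=> z i; rewrite /rho coef_sigma.
  have ag := coef_agree hiota hiota' hX hX' hh hh'.
  have rhoD : forall z w, rho (z + w) = rho z + rho w.
    move=> z w; apply: (@coef_ext _ _ _ _ hX') => i; rewrite coef_rho.
    have [_ ez] := rep_spec hX z; have [_ ew] := rep_spec hX w.
    rewrite (_ : z + w = fval iota X (toF (rep hX z) ++ toF (rep hX w))); last first.
      by rewrite fval_cat !fval_toF ez ew.
    by rewrite ag fval_cat !fval_toF.
  have rhoM : forall z w, rho (z * w) = rho z * rho w.
    move=> z w; apply: (@coef_ext _ _ _ _ hX') => i; rewrite coef_rho.
    have [_ ez] := rep_spec hX z; have [_ ew] := rep_spec hX w.
    rewrite (_ : z * w = fval iota X (mulF (toF (rep hX z)) (toF (rep hX w)))); last first.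
      by rewrite fval_mulF // !fval_toF ez ew.
    by rewrite ag fval_mulF // !fval_toF.
  have rho_sig : forall s, noTrail s -> rho (sigma iota X s) = sigma iota' X' s.
    by move=> s hs; rewrite /rho rep_sigma.
  have rho0 : rho 0 = 0.
    have -> : (0 : R) = sigma iota X [::] by rewrite sigma_nil.
    by rewrite rho_sig // sigma_nil.
  have rho1 : rho 1 = 1.
    have -> : (1 : R) = sigma iota X [:: Some (Ordinal hn)].
      by rewrite sigma_cons sigma_nil mulr0 addr0 /= e1.
    by rewrite rho_sig // sigma_cons sigma_nil mulr0 addr0 /= e1'.
  have rho_nmod : GRing.nmod_morphism rho := (rho0, rhoD).
  have rho_mon : GRing.monoid_morphism rho := (rho1, rhoM).
  pose rhoRM : {rmorphism R -> R'} :=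
    HB.pack rho (GRing.isNmodMorphism.Build _ _ rho rho_nmod)
                (GRing.isMonoidMorphism.Build _ _ rho rho_mon).
  exists rhoRM; split.
  + exists (fun z' => sigma iota X (rep hX' z')).
      move=> z /=; rewrite /rho rep_sigma; first by case: (rep_spec hX z).
      by case: (rep_spec hX z).
    move=> z' /=; rewrite /rho rep_sigma; first by case: (rep_spec hX' z').
    by case: (rep_spec hX' z').
  + have -> : X = sigma iota X [:: None; Some (Ordinal hn)].
      by rewrite !sigma_cons sigma_nil /= e1 mulr0 addr0 mulr1 add0r.
    by rewrite /= rho_sig // !sigma_cons sigma_nil /= e1' mulr0 addr0 mulr1 add0r.
  + move=> xi /=.
    have -> : iota xi = sigma iota X [:: Some xi] by rewrite sigma_cons sigma_nil mulr0 addr0.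
    by rewrite rho_sig // sigma_cons sigma_nil mulr0 addr0.
Qed.
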